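(* Let $\Lambda$ be a left cancellative small category with no nontrivial invertible morphisms (i.e. every invertible morphism is an identity). Then the equivalence relations $\sim_1$ and $\sim_2$ on $\mathcal Z*X$ coincide; consequently $G_1(\Lambda)=G_2(\Lambda)$.
   Context: A left cancellative small category (LCSC) is a small category $\Lambda$ such that $\alpha\beta=\alpha\gamma$ implies $\beta=\gamma$. Morphisms are composed as $\alpha\beta$ when $s(\alpha)=r(\beta)$; $\Lambda^0$ is the set of objects, identified with identity morphisms; $v\Lambda=\{\alpha:r(\alpha)=v\}$; $\alpha\Lambda=\{\alpha\beta:r(\beta)=s(\alpha)\}$. For $\alpha\in\Lambda$, $\tau^\alpha:s(\alpha)\Lambda\to r(\alpha)\Lambda$, $\tau^\alpha(\beta)=\alpha\beta$, and $\sigma^\alpha:\alpha\Lambda\to s(\alpha)\Lambda$ is its inverse. A zigzag is a tuple $\zeta=(\alpha_1,\beta_1,\dots,\alpha_n,\beta_n)$ in $\Lambda$ with $r(\alpha_i)=r(\beta_i)$ for all $i$ and $s(\alpha_{i+1})=s(\beta_i)$ for $i<n$; $\mathcal Z$ is the set of zigzags, $s(\zeta)=s(\beta_n)$, $r(\zeta)=s(\alpha_1)$, $\mathcal Zv=\{\zeta:s(\zeta)=v\}$, $\overline\zeta=(\beta_n,\alpha_n,\dots,\beta_1,\alpha_1)$, and composable zigzags are concatenated as tuples. The zigzag map is the partial injective map $\varphi_\zeta=\sigma^{\alpha_1}\circ\tau^{\beta_1}\circ\cdots\circ\sigma^{\alpha_n}\circ\tau^{\beta_n}$ with domain $A(\zeta)\subseteq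 s(\zeta)\Lambda$ and range $A(\overline\zeta)$. For $v\in\Lambda^0$, $\mathcal D^{(0)}_v$ is the set of nonempty sets $A(\zeta)$, $\zeta\in\mathcal Zv$, and $\mathcal A_v$ is the ring of subsets of $v\Lambda$ generated by $\mathcal D^{(0)}_v$. $X_v$ is the set of ultrafilters in the ring $\mathcal A_v$ (a filter: nonempty family of nonempty members of $\mathcal A_v$ closed under intersections and supersets in $\mathcal A_v$; ultrafilter: maximal filter), with $\mathcal U_x$ denoting the ultrafilter $x$, topologized by the compact open basic sets $\widehat E=\{x\in X_v:E\in\mathcal U_x\}$, $E\in\mathcal A_v$; $X=\bigsqcup_vX_v$ and $r(x)=v$ for $x\in X_v$. For $\zeta\in\mathcal Z$ and $x\in\widehat{A(\zeta)}$, $\{\varphi_\zeta(E\cap A(\zeta)):E\in\mathcal U_x\}$ is a base for a unique ultrafilter of $\mathcal A_{r(\zeta)}$, denoted $\Phi_\zeta(x)$; $\Phi_\zeta:\widehat{A(\zeta)}\to\widehat{A(\overline\zeta)}$ is a homeomorphism. Let $\mathcal Z*X=\{(\zeta,x):s(\zeta)=r(x),\ x\in\widehat{A(\zeta)}\}$. Define $(\zeta,x)\sim_1(\zeta',x')$ iff $x=x'$ and $\Phi_\zeta|_{\widehat E}=\Phi_{\zeta'}|_{\widehat E}$ for some $E\in\mathcal U_x$; and $(\zeta,x)\sim_2(\zeta',x')$ iff $x=x'$ and $\varphi_\zeta|_E=\varphi_{\zeta'}|_E$ for some $E\in\mathcal U_x$. $G_i(\Lambda)=(\mathcal Z*X)/\sim_i$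 ($i=1,2$), with product $[\zeta,\Phi_{\zeta'}(x)][\zeta',x]=[\zeta\zeta',x]$ and inverse $[\zeta,x]^{-1}=[\overline\zeta,\Phi_\zeta(x)]$. *)

(* Defs.v *)
(* Sets of morphisms are predicates Mor -> Prop;
   families of sets (filters, rings) are predicates on such predicates. *)
From Stdlib Require Import List.
Import ListNotations.
Set Implicit Arguments.

(** A small category: composition [comp a b] = "a b" (first b, then a),
    meaningful when [src a = rng b]. *)
Record Cat := {
  Obj : Type;
  Mor : Type;
  src : Mor -> Obj;
  rng : Mor -> Obj;
  idm : Obj -> Mor;
  comp : Mor -> Mor -> Mor;
  src_id : forall v, src (idm v) = v;
  rng_id : forall v, rng (idm v) = v;
  src_comp : forall a b, src a = rng b -> src (comp a b) = src b;
  rng_comp : forall a b, src a = rng b -> rng (comp a b) = rng a;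
  comp_id_l : forall a, comp (idm (rng a)) a = a;
  comp_id_r : forall a, comp a (idm (src a)) = a;
  comp_assoc : forall a b c, src a = rng b -> src b = rng c ->
      comp a (comp b c) = comp (comp a b) c
}.

Section Defs.
Variable C : Cat.
Notation M := (Mor C).

Definition left_cancellative : Prop :=
  forall a b c, src C a = rng C b -> src C a = rng C c ->
    comp C a b = comp C a c -> b = c.

Definition invertible (a : M) : Prop :=
  exists b, src C a = rng C b /\ src C b = rng C a /\
    comp C a b = idm C (rng C a) /\ comp C b a = idm C (src C a).

Definition no_nontrivial_invertibles : Prop :=
  forall a, invertible a -> a = idm C (rng C a).

(** A zigzag (a1,b1,...,an,bn), n >= 1, stored as first pair + rest. *)
Definition zz := ((M * M) * list (M * M))%type.
Definition zlist (z : zz) : list (M * M) := fst z :: snd z.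

Fixpoint zz_ok_list (l : list (M * M)) : Prop :=
  match l with
  | [] => True
  | (a, b) :: rest =>
      rng C a = rng C b /\
      match rest with
      | [] => True
      | (a', _) :: _ => src C a' = src C b
      end /\ zz_ok_list rest
  end.

Definition is_zigzag (z : zz) : Prop := zz_ok_list (zlist z).

(** s(zeta) = s(b_n), r(zeta) = s(a_1) *)
Definition zsrc (z : zz) : Obj C := src C (snd (last (zlist z) (fst z))).
Definition zrng (z : zz) : Obj C := src C (fst (fst z)).

(** graph of sigma^a o tau^b : y |-> z with a z = b y *)
Definition step (a b y w : M) : Prop :=
  rng C y = src C b /\ rng C w = src C a /\ comp C b y = comp C a w.

(** graph of sigma^{a1} o tau^{b1} o ... o sigma^{an} o tau^{bn} *)
Fixpoint zgraph_list (l : list (M * M)) (x w : M) : Prop :=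
  match l with
  | [] => x = w
  | (a, b) :: rest => exists y, zgraph_list rest x y /\ step a b y w
  end.

Definition zgraph (z : zz) : M -> M -> Prop := zgraph_list (zlist z).

Definition Adom (z : zz) : M -> Prop := fun x => exists w, zgraph z x w.

Definition family := (M -> Prop) -> Prop.

(** rings of sets (closed under extensional equality) *)
Definition is_ring (R : family) : Prop :=
  R (fun _ => False) /\
  (forall E F, R E -> R F -> R (fun x => E x \/ F x)) /\
  (forall E F, R E -> R F -> R (fun x => E x /\ ~ F x)) /\
  (forall E F, R E -> (forall x, E x <-> F x) -> R F).

(** A_v : the ring generated by D^(0)_v *)
Definition A_ring (v : Obj C) : family := fun E =>
  forall R : family, is_ring R ->
    (forall z, is_zigzag z -> zsrc z = v -> (exists x, Adom z x) -> R (Adom z)) ->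
    R E.

Definition is_filter (v : Obj C) (F : family) : Prop :=
  (exists E, F E) /\
  (forall E, F E -> A_ring v E /\ exists x, E x) /\
  (forall E E', F E -> F E' -> F (fun x => E x /\ E' x)) /\
  (forall E E', F E -> A_ring v E' -> (forall x, E x -> E' x) -> F E').

Definition is_ultrafilter (v : Obj C) (U : family) : Prop :=
  is_filter v U /\
  forall F, is_filter v F -> (forall E, U E -> F E) -> forall E, F E -> U E.

(** Phi_zeta(x): the filter of A_{r(zeta)} with base
    { phi_zeta(E cap A(zeta)) : E in U_x } *)
Definition Phi (z : zz) (U : family) : family := fun F =>
  A_ring (zrng z) F /\
  exists E, U E /\ forall y, (exists x, E x /\ Adom z x /\ zgraph z x y) -> F y.

(** (zeta, x) in Z * X, with x the ultrafilter U of A_v *)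
Definition in_ZX (z : zz) (v : Obj C) (U : family) : Prop :=
  is_zigzag z /\ zsrc z = v /\ is_ultrafilter v U /\ U (Adom z).

Definition same_point (v : Obj C) (U : family) (v' : Obj C) (U' : family) : Prop :=
  v = v' /\ forall E, U E <-> U' E.

(** ~1 : Phi_zeta and Phi_zeta' agree (as partial maps) on \hat E *)
Definition sim1 (z : zz) (v : Obj C) (U : family)
                (z' : zz) (v' : Obj C) (U' : family) : Prop :=
  same_point v U v' U' /\
  exists E, U E /\
    forall W, is_ultrafilter v W -> W E ->
      (W (Adom z) <-> W (Adom z')) /\
      (W (Adom z) -> forall F, Phi z W F <-> Phi z' W F).

Definition sim2 (z : zz) (v : Obj C) (U : family)
                (z' : zz) (v' : Obj C) (U' : family) : Prop :=
  same_point v U v' U' /\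
  exists E, U E /\
    forall x y, E x -> (zgraph z x y <-> zgraph z' x y).

End Defs.

(* Main.v *)
Require Import Defs.
From Stdlib Require Import List Classical.
Import ListNotations.
From mathcomp Require classical_sets.

Lemma A_ring_inter (C : Cat) (v : Obj C) E F :
  A_ring C v E -> A_ring C v F -> A_ring C v (fun x => E x /\ F x).
Proof.
  intros HE HF R HR Hg.
  pose proof HR as HR'; destruct HR' as [H0 [HU [HD HX]]].
  apply (HX (fun x => E x /\ ~ (E x /\ ~ F x))).
  - apply HD. apply HE; auto. apply HD; [apply HE|apply HF]; auto.
  - intros x; split.
    + intros [h1 h2]; split; auto. apply NNPP; intro; auto.
    + intros [h1 h2]; split; auto. intros [_ h]; auto.
Qed.

Lemma A_ring_diff (C : Cat) (v : Obj C) E F :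
  A_ring C v E -> A_ring C v F -> A_ring C v (fun x => E x /\ ~ F x).
Proof.
  intros HE HF R HR Hg. pose proof HR as HR'; destruct HR' as [H0 [HU [HD HX]]]. apply HD; auto.
  apply HE; auto. apply HF; auto.
Qed.

Lemma A_ring_ext (C : Cat) (v : Obj C) (E F : Mor C -> Prop) :
  A_ring C v E -> (forall x, E x <-> F x) -> A_ring C v F.
Proof.
  intros HE Hx R HR Hg. pose proof HR as HR'; destruct HR' as [H0 [HU [HD HX]]]. apply (HX E); auto.
  apply HE; auto.
Qed.

Lemma A_ring_gen (C : Cat) (v : Obj C) (z : zz C) :
  is_zigzag z -> zsrc z = v -> A_ring C v (Adom z).
Proof.
  intros Hz Hs R HR Hg.
  destruct (classic (exists x, Adom z x)) as [Hn|Hn].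
  - apply Hg; auto.
  - pose proof HR as HR'; destruct HR' as [H0 [HU [HD HX]]]. apply (HX (fun _ => False)); auto.
    intros x; split; [intros []|intros h; apply Hn; exists x; auto].
Qed.

Lemma ultra_exists (C : Cat) (v : Obj C) (F0 : Mor C -> Prop) :
  A_ring C v F0 -> (exists x, F0 x) ->
  exists W, is_ultrafilter v W /\ W F0.
Proof.
  intros HF0 [x0 Hx0].
  pose (P := fun W : family C => (forall E, ~ W E) \/ (is_filter v W /\ W F0)).
  destruct (@classical_sets.Zorn_bigcup (Mor C -> Prop) P) as [A [PA Amax]].
  - intros F FP Ftot. unfold P.
    destruct (classic (exists W E, F W /\ W E)) as [[W0 [E0 [FW0 W0E0]]]|Hn].
    2:{ left. intros E [W FW WE]. apply Hn. exists W, E; auto. }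
    assert (HW0 : is_filter v W0 /\ W0 F0).
    { destruct (FP W0 FW0) as [H|H]; [exfalso; exact (H E0 W0E0)|exact H]. }
    right.
    assert (Hfil : forall W E, F W -> W E -> is_filter v W /\ W F0).
    { intros W E FW WE. destruct (FP W FW) as [H|H]; [exfalso; exact (H E WE)|exact H]. }
    split.
    + split; [|split; [|split]].
      * exists F0. exists W0; auto. apply HW0.
      * intros E [W FW WE]. apply (proj1 (proj2 (proj1 (Hfil W E FW WE)))); auto.
      * intros E E' [W FW WE] [W' FW' WE'].
        destruct (Ftot W W' FW FW') as [S|S].
        -- exists W'; auto. apply (proj1 (proj2 (proj2 (proj1 (Hfil W' E' FW' WE'))))); auto.
        -- exists W; auto. apply (proj1 (proj2 (proj2 (proj1 (Hfil W E FW WE))))); auto.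
      * intros E E' [W FW WE] HA Hs. exists W; auto.
        apply (proj2 (proj2 (proj2 (proj1 (Hfil W E FW WE)))) E); auto.
    + exists W0; auto. apply HW0.
  - destruct PA as [Aemp|[Afil AF0]].
    + exfalso. apply (Amax (fun E => A_ring C v E /\ forall x, F0 x -> E x)).
      * split. intros E AE. exfalso; exact (Aemp E AE).
        intros Hs. apply (Aemp F0). apply Hs. split; auto.
      * right. split.
        -- split; [|split; [|split]].
           ++ exists F0; split; auto.
           ++ intros E [HE HE2]. split; auto. exists x0; auto.
           ++ intros E E' [HE HE1] [HE' HE1']. split.
              ** apply A_ring_inter; auto.
              ** intros x Hx; split; auto.
           ++ intros E E' [HE HE2] HE' Hs. split; auto.
        -- hnf; split; auto.
    + exists A. split; [|exact AF0]. split; [exact Afil|].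
      intros F Ffil Fsup E FE. apply NNPP; intro nAE.
      apply (Amax F).
      * split. exact Fsup. intros Hs. exact (nAE (Hs E FE)).
      * right. split; auto.
Qed.

Lemma zg_src (C : Cat) l (x y : Mor C) : zgraph_list C l x y -> src C x = src C y.
Proof.
  revert y; induction l as [|[a b] l IH]; simpl; intros y H.
  - subst; auto.
  - destruct H as [y0 [H1 [h1 [h2 h3]]]].
    rewrite (IH _ H1).
    rewrite <- (src_comp C b y0) by auto. rewrite h3. apply src_comp; auto.
Qed.

Lemma zg_eqv (C : Cat) l (x y g : Mor C) : zgraph_list C l x y ->
  rng C g = src C x -> zgraph_list C l (comp C x g) (comp C y g).
Proof.
  revert y; induction l as [|[a b] l IH]; simpl; intros y H Hg.
  - subst; auto.
  - destruct H as [y0 [H1 [h1 [h2 h3]]]].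
    exists (comp C y0 g). split; [apply IH; auto|].
    pose proof (zg_src _ _ _ _ H1) as Hs.
    assert (Hw : src C y = src C y0).
    { rewrite <- (src_comp C b y0) by auto. rewrite h3. symmetry; apply src_comp; auto. }
    split; [|split].
    + rewrite rng_comp; auto. congruence.
    + rewrite rng_comp; auto. congruence.
    + rewrite comp_assoc; auto; [|congruence]. rewrite h3.
      rewrite <- comp_assoc; auto. congruence.
Qed.

Lemma zg_det (C : Cat) (Hlc : left_cancellative C) l (x y y' : Mor C) :
  zgraph_list C l x y -> zgraph_list C l x y' -> y = y'.
Proof.
  revert y y'; induction l as [|[a b] l IH]; simpl; intros y y' H H'.
  - congruence.
  - destruct H as [y0 [H1 [h1 [h2 h3]]]].
    destruct H' as [y0' [H1' [h1' [h2' h3']]]].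
    rewrite <- (IH _ _ H1 H1') in h3'.
    apply (Hlc a); auto. congruence.
Qed.

Lemma zg_rng (C : Cat) (z : zz C) (x y : Mor C) : zgraph z x y -> rng C y = zrng z.
Proof.
  destruct z as [[a b] l]. unfold zgraph, zrng; simpl.
  intros [y0 [_ [_ [h _]]]]. exact h.
Qed.

Lemma zgl_dom (C : Cat) l d (x y : Mor C) : l <> [] -> zgraph_list C l x y ->
  rng C x = src C (snd (last l d)).
Proof.
  revert y; induction l as [|[a b] l IH]; simpl; intros y Hn H.
  - congruence.
  - destruct H as [y0 [H1 [h1 _]]].
    destruct l as [|p l].
    + simpl in H1. subst. exact h1.
    + apply (IH y0); auto. congruence.
Qed.

Lemma zg_dom (C : Cat) (z : zz C) (x y : Mor C) : zgraph z x y -> rng C x = zsrc z.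
Proof.
  intros H. unfold zsrc. apply (zgl_dom C (zlist z) (fst z) x y); auto.
  unfold zlist; congruence.
Qed.

Lemma fil_inter (C : Cat) v (W : family C) A B : is_filter v W -> W A -> W B ->
  W (fun x => A x /\ B x).
Proof. intros [_ [_ [H _]]]; auto. Qed.

Lemma fil_up (C : Cat) v (W : family C) (A B : Mor C -> Prop) : is_filter v W -> W A ->
  A_ring C v B -> (forall x, A x -> B x) -> W B.
Proof. intros [_ [_ [_ H]]] HA HB Hs; eapply H; eauto. Qed.

Lemma fil_ne (C : Cat) v (W : family C) A : is_filter v W -> W A -> exists x, A x.
Proof. intros [_ [H _]] HA; apply (H A HA). Qed.

Lemma fil_ring (C : Cat) v (W : family C) A : is_filter v W -> W A -> A_ring C v A.
Proof. intros [_ [H _]] HA; apply (H A HA). Qed.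

Definition pz (C : Cat) (b : Mor C) : zz C := ((b, idm C (rng C b)), []).

Lemma pz_dom (C : Cat) (b y : Mor C) :
  Adom (pz C b) y <-> exists w, rng C w = src C b /\ y = comp C b w.
Proof.
  unfold Adom, zgraph, pz, zlist; simpl. split.
  - intros [w [y0 [-> [h1 [h2 h3]]]]]. exists w; split; auto.
    rewrite src_id in h1. rewrite <- h1 in h3. rewrite comp_id_l in h3. auto.
  - intros [w [h1 ->]]. exists w, (comp C b w). split; auto.
    split; [|split]; auto.
    + rewrite src_id. apply rng_comp; auto.
    + assert (rng C (comp C b w) = rng C b) by (apply rng_comp; auto).
      rewrite <- H at 1. apply comp_id_l.
Qed.

Lemma pz_zig (C : Cat) (b : Mor C) : is_zigzag (pz C b) /\ zsrc (pz C b) = rng C b.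
Proof.
  unfold is_zigzag, zsrc, pz, zlist; simpl. rewrite rng_id, src_id. auto.
Qed.

Definition zz3 (C : Cat) (bb b a : Mor C) : zz C := ((bb, b), [(a, idm C (rng C a))]).

Lemma zz3_dom (C : Cat) (bb b a x : Mor C) (Hab : src C a = src C b) :
  Adom (zz3 C bb b a) x <-> exists g h, rng C g = src C a /\ x = comp C a g /\
     rng C h = src C bb /\ comp C b g = comp C bb h.
Proof.
  unfold Adom, zgraph, zz3, zlist; simpl. split.
  - intros [w [y [[y0 [-> [h1 [h2 h3]]]] [k1 [k2 k3]]]]].
    exists y, w. rewrite src_id in h1. rewrite <- h1 in h3. rewrite comp_id_l in h3.
    auto.
  - intros [g [h [h1 [-> [h2 h3]]]]]. exists h, g. split; [|split; [|split]]; auto.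
    + exists (comp C a g). split; auto. split; [|split]; auto.
      * rewrite src_id. apply rng_comp; auto.
      * assert (rng C (comp C a g) = rng C a) by (apply rng_comp; auto).
        rewrite <- H at 1. apply comp_id_l.
    + congruence.
Qed.

Lemma zz3_zig (C : Cat) (bb b a : Mor C) : rng C bb = rng C b -> src C a = src C b ->
  is_zigzag (zz3 C bb b a) /\ zsrc (zz3 C bb b a) = rng C a.
Proof.
  intros h1 h2. unfold is_zigzag, zsrc, zz3, zlist; simpl. rewrite rng_id, src_id. repeat split; auto; congruence.
Qed.

Lemma core (C : Cat) (Hlc : left_cancellative C) v (za zb : zz C) (W : family C)
  (F0 F : Mor C -> Prop) (al ba bb : Mor C) :
  is_filter v W -> W F0 ->
  (forall x, F0 x -> exists g, rng C g = src C al /\ x = comp C al g) ->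
  zgraph za al ba -> zgraph zb al bb -> A_ring C (zrng za) F ->
  (forall g, rng C g = src C al -> F0 (comp C al g) -> F (comp C ba g) /\ ~ F (comp C bb g)) ->
  (forall G, Phi za W G -> Phi zb W G) -> False.
Proof.
  intros HW HF0 Hal Ha Hb HF Hg HP.
  assert (Pa : Phi za W F).
  { split; auto. exists F0; split; auto.
    intros y [x [Hx [_ Hxy]]]. destruct (Hal x Hx) as [g [Hg1 ->]].
    pose proof (zg_eqv C _ _ _ g Ha Hg1) as He.
    rewrite (zg_det C Hlc _ _ _ _ Hxy He). apply Hg; auto. }
  destruct (HP F Pa) as [_ [E2 [HE2 Him]]].
  destruct (fil_ne C v W _ HW (fil_inter C v W _ _ HW HE2 HF0)) as [x [hx1 hx2]].
  destruct (Hal x hx2) as [g [Hg1 ->]].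
  pose proof (zg_eqv C _ _ _ g Hb Hg1) as He.
  apply (Hg g Hg1 hx2). apply Him. exists (comp C al g). split; auto. split; auto.
  exists (comp C bb g); auto.
Qed.

Lemma claim (C : Cat) (Hlc : left_cancellative C) v (za zb : zz C) (E1 : Mor C -> Prop)
  (al ba bb : Mor C) :
  is_zigzag za -> zsrc za = v -> A_ring C v E1 -> E1 al ->
  zgraph za al ba -> zgraph zb al bb ->
  (forall W, is_ultrafilter v W -> W E1 -> W (Adom za) -> forall G, Phi za W G -> Phi zb W G) ->
  (rng C ba <> rng C bb \/
   (rng C ba = rng C bb /\ ~ exists h, rng C h = src C bb /\ ba = comp C bb h)) -> False.
Proof.
  intros Hz Hzs HE1 Hal Ha Hb Hs Hcase.
  assert (Hrv : rng C al = v) by (rewrite (zg_dom C za al ba Ha); auto).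
  assert (Hsa : src C al = src C ba) by apply (zg_src C _ _ _ Ha).
  assert (Hsb : src C al = src C bb) by apply (zg_src C _ _ _ Hb).
  assert (Hra : rng C ba = zrng za) by apply (zg_rng C _ _ _ Ha).
  assert (Hmain : forall F0 F, A_ring C v F0 -> F0 al ->
     (forall x, F0 x -> E1 x) ->
     (forall x, F0 x -> exists g, rng C g = src C al /\ x = comp C al g) ->
     A_ring C (zrng za) F ->
     (forall g, rng C g = src C al -> F0 (comp C al g) -> F (comp C ba g) /\ ~ F (comp C bb g)) ->
     False).
  { intros F0 F HF0 HF0a HF0E Hal0 HF Hg.
    destruct (ultra_exists C v F0 HF0 (ex_intro _ al HF0a)) as [W [HW HWF0]].
    assert (HWf : is_filter v W) by apply HW.
    apply (core C Hlc v za zb W F0 F al ba bb HWf HWF0 Hal0 Ha Hb HF Hg).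
    apply Hs; auto.
    - apply (fil_up C v W F0); auto.
    - apply (fil_up C v W F0); auto. apply A_ring_gen; auto.
      intros x Hx. destruct (Hal0 x Hx) as [g [Hg1 ->]].
      exists (comp C ba g). apply zg_eqv; auto. }
  destruct (pz_zig C al) as [Zal Zals].
  destruct (pz_zig C ba) as [Zba Zbas].
  destruct (pz_zig C bb) as [Zbb Zbbs].
  destruct Hcase as [Hne|[Heq Hnex]].
  - apply (Hmain (fun x => E1 x /\ Adom (pz C al) x) (Adom (pz C ba))).
    + apply A_ring_inter; auto. apply A_ring_gen; auto. congruence.
    + split; auto. apply pz_dom. exists (idm C (src C al)). rewrite rng_id, comp_id_r. auto.
    + intros x [h _]; auto.
    + intros x [_ h]. apply pz_dom in h. exact h.
    + rewrite <- Hra. apply A_ring_gen; auto.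
    + intros g Hg1 _. split.
      * apply pz_dom. exists g; split; auto. congruence.
      * intros h. apply pz_dom in h. destruct h as [w [hw1 hw]].
        apply Hne. rewrite <- (rng_comp C ba w) by congruence. rewrite <- hw. apply rng_comp; congruence.
  - pose (aG := fun x => exists g, rng C g = src C al /\ x = comp C al g /\
                 ~ exists h, rng C h = src C bb /\ comp C ba g = comp C bb h).
    assert (HaG : A_ring C v aG).
    { destruct (zz3_zig C bb ba al) as [Z3 Z3s]; try congruence.
      apply (A_ring_ext C v (fun x => Adom (pz C al) x /\ ~ Adom (zz3 C bb ba al) x)).
      - apply A_ring_diff; apply A_ring_gen; auto; congruence.
      - intros x; split.
        + intros [h1 h2]. apply pz_dom in h1. destruct h1 as [g [hg ->]].
          exists g; split; auto. split; auto. intros [h [hh1 hh2]].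
          apply h2. apply zz3_dom; auto. exists g, h; auto.
        + intros [g [hg1 [-> hg2]]]. split.
          * apply pz_dom. exists g; auto.
          * intros h. apply zz3_dom in h; auto.
            destruct h as [g' [h [hg' [e [hh1 hh2]]]]].
            apply (Hlc al) in e; auto. subst g'. apply hg2. exists h; auto. }
    apply (Hmain (fun x => E1 x /\ aG x)
                 (fun y => Adom (pz C ba) y /\ ~ Adom (pz C bb) y)).
    + apply A_ring_inter; auto.
    + split; auto. exists (idm C (src C al)). rewrite rng_id, comp_id_r.
      split; auto. split; auto. intros [h [hh1 hh2]]. apply Hnex. exists h. split; auto.
      rewrite Hsa, comp_id_r in hh2. auto.
    + intros x [h _]; auto.
    + intros x [_ [g [h1 [h2 _]]]]. exists g; auto.
    + apply A_ring_diff; rewrite <- Hra; apply A_ring_gen; auto. congruence.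
    + intros g Hg1 [_ [g' [hg' [e hne]]]].
      apply (Hlc al) in e; auto. subst g'. split; [split|].
      * apply pz_dom. exists g; split; auto. congruence.
      * intros h. apply pz_dom in h. destruct h as [w [hw1 hw]].
        apply hne. exists w; auto.
      * intros [_ h]. apply h. apply pz_dom. exists g; split; auto. congruence.
Qed.

Lemma no_mutual (C : Cat) (Hlc : left_cancellative C) (Hinv : no_nontrivial_invertibles C)
  (b b' h k : Mor C) : rng C h = src C b' -> b = comp C b' h ->
  rng C k = src C b -> b' = comp C b k -> b = b'.
Proof.
  intros Hh Hb Hk Hb'.
  assert (Hsk : src C b' = src C k) by (rewrite Hb'; apply src_comp; auto).
  assert (Hsh : src C b = src C h) by (rewrite Hb; apply src_comp; auto).
  assert (E1 : comp C k h = idm C (src C b)).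
  { apply (Hlc b).
    - rewrite rng_comp; congruence.
    - rewrite rng_id; auto.
    - rewrite comp_id_r. rewrite comp_assoc by congruence. rewrite <- Hb'. congruence. }
  assert (E2 : comp C h k = idm C (src C k)).
  { apply (Hlc k).
    - rewrite rng_comp; congruence.
    - rewrite rng_id; auto.
    - rewrite comp_id_r. rewrite comp_assoc by congruence. rewrite E1, <- Hk.
      apply comp_id_l. }
  assert (Hi : invertible C k).
  { exists h. split; [congruence|]. split; [congruence|]. split; auto. congruence. }
  apply Hinv in Hi. rewrite Hb', Hi, Hk. symmetry. apply comp_id_r.
Qed.

Theorem mainTheorem3 (C : Cat)
  (Hlc : left_cancellative C) (Hinv : no_nontrivial_invertibles C)
  (z : zz C) (v : Obj C) (U : family C)
  (z' : zz C) (v' : Obj C) (U' : family C)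
  (HzU : in_ZX z v U) (HzU' : in_ZX z' v' U') :
  sim1 z v U z' v' U' <-> sim2 z v U z' v' U'.
Proof.
  destruct HzU as [Hz [Hzs [HU HUz]]].
  destruct HzU' as [Hz' [Hzs' [HU' HUz']]].
  assert (HUf : is_filter v U) by apply HU.
  split.
  - intros [[Hvv HUU] [E1 [HUE1 Hs1]]]. subst v'.
    split; [split; auto|].
    exists (fun x => E1 x /\ Adom z x /\ Adom z' x). split.
    + apply fil_inter with v; auto. apply fil_inter with v; auto. apply HUU; auto.
    + intros x y [hE [[b hb] [b' hb']]].
      assert (HE1 : A_ring C v E1) by (apply (fil_ring C v U); auto).
      assert (Hbb : b = b').
      { apply NNPP; intro Hne.
        destruct (classic (rng C b = rng C b')) as [Hr|Hr].
        - destruct (classic (exists h, rng C h = src C b' /\ b = comp C b' h)) as [[h [h1 h2]]|Hn].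
          + destruct (classic (exists k, rng C k = src C b /\ b' = comp C b k)) as [[k [k1 k2]]|Hn'].
            * apply Hne. apply (no_mutual C Hlc Hinv b b' h k); auto.
            * refine (claim C Hlc v z' z E1 x b' b Hz' (eq_sym Hvv) HE1 hE hb' hb _ _).
              -- intros W HW HWE HWz G. apply (proj2 (proj2 (Hs1 W HW HWE) (proj2 (proj1 (Hs1 W HW HWE)) HWz) G)).
              -- right. split; auto.
          + refine (claim C Hlc v z z' E1 x b b' Hz Hzs HE1 hE hb hb' _ _); auto.
            intros W HW HWE HWz G. apply (proj1 (proj2 (Hs1 W HW HWE) HWz G)).
        - refine (claim C Hlc v z z' E1 x b b' Hz Hzs HE1 hE hb hb' _ _); auto.
          intros W HW HWE HWz G. apply (proj1 (proj2 (Hs1 W HW HWE) HWz G)). }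
      subst b'. split; intros H.
      * rewrite (zg_det C Hlc _ _ _ _ H hb). auto.
      * rewrite (zg_det C Hlc _ _ _ _ H hb'). auto.
  - intros [[Hvv HUU] [E [HUE Heq]]]. subst v'.
    split; [split; auto|]. exists E. split; auto.
    intros W HW HWE. assert (HWf : is_filter v W) by apply HW.
    assert (Hd : forall x, E x -> (Adom z x <-> Adom z' x)).
    { intros x hx; split; intros [w hw]; exists w; apply (Heq x w hx); auto. }
    assert (Hzz : W (Adom z) -> W (Adom z')).
    { intros HWz. apply (fil_up C v W (fun x => Adom z x /\ E x)); auto.
      - apply fil_inter with v; auto.
      - apply A_ring_gen; auto.
      - intros x [h1 h2]. apply Hd; auto. }
    assert (Hzz' : W (Adom z') -> W (Adom z)).
    { intros HWz. apply (fil_up C v W (fun x => Adom z' x /\ E x)); auto.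
      - apply fil_inter with v; auto.
      - apply A_ring_gen; auto.
      - intros x [h1 h2]. apply Hd; auto. }
    split; [split; auto|].
    intros HWz.
    destruct (fil_ne C v W _ HWf (fil_inter C v W _ _ HWf HWz HWE)) as [x0 [[w0 hw0] hx0]].
    assert (Hrr : zrng z = zrng z').
    { rewrite <- (zg_rng C z x0 w0 hw0). apply (zg_rng C z' x0 w0). apply Heq; auto. }
    intros F. split.
    + intros [HA [E1 [HW1 Him]]]. split; [rewrite <- Hrr; auto|].
      exists (fun x => E1 x /\ E x). split; [apply fil_inter with v; auto|].
      intros y [x [[h1 h2] [h3 h4]]]. apply Him. exists x. split; auto. split.
      * apply Hd; auto.
      * apply Heq; auto.
    + intros [HA [E1 [HW1 Him]]]. split; [rewrite Hrr; auto|].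
      exists (fun x => E1 x /\ E x). split; [apply fil_inter with v; auto|].
      intros y [x [[h1 h2] [h3 h4]]]. apply Him. exists x. split; auto. split.
      * apply Hd; auto.
      * apply Heq; auto.
Qed.
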